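(* Let $\mathcal{F}=\{B_1,\dots,B_t\}$ be a $(G,[k_1,\dots,k_t],\lambda)$ Hadamard partitioned difference family, assume $G$ has a subgroup $H$ of index $2$, and set $s_i=|B_i\cap H|$ for $i=1,\dots,t$. Then $$s_1+\cdots+s_t=\lambda\qquad\text{and}\qquad 2s_1(k_1-s_1)+\cdots+2s_t(k_t-s_t)=\lambda^2.$$
   Context: $G$ is a finite group written additively, with difference $x-y:=x+(-y)$. For $B\subseteq G$, $\Delta B$ is the multiset $\{x-y: x,y\in B, x\neq y\}$; for $\mathcal{F}=\{B_1,\dots,B_t\}$, $\Delta\mathcal{F}$ is the multiset union of the $\Delta B_i$. $\mathcal{F}$ is a $(G,[k_1,\dots,k_t],\lambda)$ partitioned difference family if the $B_i$ partition $G$, $|B_i|=k_i$, and $\Delta\mathcal{F}$ contains every non-zero element of $G$ exactly $\lambda$ times; it is Hadamard if $|G|=2\lambda$. *)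

(* Defs.v *)
(* The finite group G is a (possibly non-abelian) finite group;
   we use MathComp's multiplicative finGroupType, so the paper's additive
   difference x - y = x + (-y) is rendered as x * y^-1. *)
From mathcomp Require Import all_boot all_order all_fingroup.
Set Implicit Arguments. Unset Strict Implicit. Unset Printing Implicit Defensive.
Local Open Scope group_scope.

(* Multiplicity of g in the multiset Delta F = union of Delta B_i,
   Delta B = { x - y : x,y in B, x <> y }. *)
Definition diff_mult (gT : finGroupType) (t : nat) (B : 'I_t -> {set gT}) (g : gT) : nat :=
  (\sum_(i < t) #|[set p in setX (B i) (B i) | (p.1 != p.2) && ((p.1 * p.2^-1)%g == g)]|)%N.

Definition is_PDF (gT : finGroupType) (G : {group gT}) (t : nat)
    (B : 'I_t -> {set gT}) (k : 'I_t -> nat) (lambda : nat) : Prop :=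
  [/\ (forall i j, i != j -> [disjoint B i & B j]),
      \bigcup_(i < t) B i = G,
      (forall i, #|B i| = k i) &
      (forall g, g \in G -> g != 1%g -> diff_mult B g = lambda)].

Definition is_Hadamard_PDF (gT : finGroupType) (G : {group gT}) (t : nat)
    (B : 'I_t -> {set gT}) (k : 'I_t -> nat) (lambda : nat) : Prop :=
  is_PDF G B k lambda /\ #|G| = (2 * lambda)%N.

(* Main.v *)
Require Import Defs.
From mathcomp Require Import all_boot all_order all_fingroup.
From mathcomp Require Import zify.
Set Implicit Arguments. Unset Strict Implicit. Unset Printing Implicit Defensive.

Lemma card_sep (T : finType) (A : {set T}) (Q : pred T) :
  #|[set p in A | Q p]| = (\sum_(p in A) Q p)%N.
Proof.
rewrite -sum1_card (eq_bigl (fun p => (p \in A) && Q p)); last by move=> p; rewrite inE.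
rewrite big_mkcondr /=; apply: eq_bigr => p _.
by case: (Q p).
Qed.

Lemma sum_fiber (T U : finType) (A : {set T}) (D : {set U}) (f : T -> U) (P : pred T) :
  (\sum_(g in D) #|[set p in A | P p && (f p == g)]| =
   #|[set p in A | P p && (f p \in D)]|)%N.
Proof.
rewrite card_sep; under eq_bigr do rewrite card_sep.
rewrite exchange_big /=; apply: eq_bigr => p _.
case: (P p) => /=; last by rewrite big1.
case: (boolP (f p \in D)) => h.
  rewrite (bigD1 (f p)) //= eqxx big1 // => g /andP[_ ne].
  by rewrite eq_sym (negbTE ne).
rewrite big1 // => g gD; case: eqP => // e; by rewrite e gD in h.
Qed.

Lemma idx2 (gT : finGroupType) (G H : {group gT}) x y :
  H \subset G -> #|G : H|%g = 2 -> x \in G -> y \in G ->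
  ((x * y^-1)%g \in H) = ((x \in H) == (y \in H)).
Proof.
move=> sHG iG xG yG.
case xH: (x \in H); case yH: (y \in H) => /=.
- by rewrite groupM ?groupV.
- by rewrite groupMl // groupV yH.
- by rewrite groupMr ?groupV // xH.
apply/negbFE/negP => nxy.
have neq : forall z, z \in G -> z \notin H -> (H :* z)%g != H.
  move=> z _ zH; apply/eqP => e; move: (rcoset_refl H z); rewrite e.
  by apply/negP.
have Hxy : (H :* x)%g != (H :* y)%g.
  apply/eqP => e; apply: nxy; rewrite -mem_rcoset -e; exact: rcoset_refl.
have sub : [set (H : {set gT}); (H :* x)%g; (H :* y)%g] \subset rcosets H G.
  apply/subsetP => C; rewrite !inE => /orP[/orP[] | ] /eqP ->.
  - by apply/rcosetsP; exists 1%g; rewrite ?rcoset1.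
  - by apply/rcosetsP; exists x.
  - by apply/rcosetsP; exists y.
have := subset_leq_card sub; rewrite -/(indexg G H) iG.
rewrite -setUA cardsU1 cards2 Hxy !inE negb_or eq_sym (neq x xG) ?xH //.
by rewrite eq_sym (neq y yG) ?yH.
Qed.

Theorem proposition5p1 (gT : finGroupType) (G H : {group gT}) (t : nat)
    (B : 'I_t -> {set gT}) (k : 'I_t -> nat) (lambda : nat) :
  is_Hadamard_PDF G B k lambda ->
  H \subset G -> #|G : H|%g = 2 ->
  (\sum_(i < t) #|B i :&: H| = lambda)%N /\
  (\sum_(i < t) 2 * #|B i :&: H| * (k i - #|B i :&: H|) = lambda ^ 2)%N.
Proof.
move=> [[D U K M] cG] sHG iG.
have BG : forall i, B i \subset G.
  by move=> i; rewrite -U; apply: (bigcup_sup i).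
have cH : #|H| = lambda.
  have := Lagrange sHG; rewrite iG cG; lia.
split.
  rewrite -cH -sum1_card.
  have -> : (\sum_(i < t) #|B i :&: H| = \sum_(i < t) \sum_(x in H) (x \in B i))%N.
    apply: eq_bigr => i _; rewrite -card_sep; apply: eq_card => x; rewrite !inE; by case: (x \in H); case: (x \in B i).
  rewrite exchange_big /=; apply: eq_bigr => x xH.
  have : x \in G by apply: (subsetP sHG).
  rewrite -U => /bigcupP[i0 _ xi0].
  rewrite (bigD1 i0) //= xi0 big1 // => j ne.
  have := D i0 j; rewrite eq_sym ne => /(_ isT) dj.
  by rewrite (disjointFr dj xi0).
have cD : #|G :\: H| = lambda by rewrite cardsD (setIidPr sHG) cG cH; lia.
have -> : (lambda ^ 2 = \sum_(g in G :\: H) diff_mult B g)%N.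
  rewrite (eq_bigr (fun _ => lambda)) ?sum_nat_const ?cD; first lia.
  move=> g; rewrite inE => /andP[gH gG]; apply: M => //.
  by apply: contraNneq gH => ->; exact: group1.
rewrite /diff_mult exchange_big /=; apply: eq_bigr => i _.
rewrite (@sum_fiber _ _ _ _ (fun p : gT * gT => (p.1 * p.2^-1)%g) (fun p : gT * gT => p.1 != p.2)).
set s := #|B i :&: H|.
have -> : [set p in setX (B i) (B i) | (p.1 != p.2) && ((p.1 * p.2^-1)%g \in G :\: H)] =
   setX (B i :&: H) (B i :\: H) :|: setX (B i :\: H) (B i :&: H).
  apply/setP => [[a b]]; rewrite !inE /=.
  case aB: (a \in B i); case bB: (b \in B i); rewrite ?andbF ?andbT //=.
  have aG := subsetP (BG i) a aB; have bG := subsetP (BG i) b bB.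
  rewrite (idx2 sHG iG aG bG) groupM ?groupV //.
  case aH: (a \in H); case bH: (b \in H); rewrite ?andbF ?andbT //=.
    by apply/eqP => e; rewrite e bH in aH.
  by apply/eqP => e; rewrite e bH in aH.
rewrite cardsU.
have -> : setX (B i :&: H) (B i :\: H) :&: setX (B i :\: H) (B i :&: H) = set0.
  apply/setP => [[a b]]; rewrite !inE /=.
  by case: (a \in H); rewrite ?andbF ?andbT ?andbF.
rewrite cards0 !cardsX cardsD K -/s.
by rewrite subn0 (mulnC (k i - s)) -mulnA mul2n -addnn.
Qed.
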